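(* Let $\mathcal G$ be a finite simplicial graph with a base vertex $v$ and a vertex $w\neq v$. Let $\mathcal L$ be the wedge of four copies of $\mathcal G$ glued along $v$. Let $X_{\mathcal L}$ be the universal cover of the Salvetti complex $S_{\mathcal L}$, and let $\Gamma_{\mathcal L}$ and $BB_{\mathcal L}$ be the right-angled Artin group and Bestvina–Brady group of $\mathcal L$, viewed as discrete subgroups of $G=\mathrm{Aut}(X_{\mathcal L})$ via the deck transformation action. Then $\mathrm{Comm}_G(BB_{\mathcal L})\cap\mathrm{Comm}_G(\Gamma_{\mathcal L})$ is not discrete in $G$. In particular, $\mathrm{Comm}_G(BB_{\mathcal L})$ is not discrete.
   Context: For a finite simplicial graph $\mathcal L$, the right-angled Artin group $\Gamma_{\mathcal L}$ has one generator per vertex and relations that generators of adjacent vertices commute. Its Salvetti complex $S_{\mathcal L}$ is the cube complex with one vertex, one oriented edge-loop per vertex of $\mathcal L$, and a $k$-torus (a $k$-cube with opposite faces identified) for each complete subgraph on $k$ vertices; $\pi_1 S_{\mathcal L}=\Gamma_{\mathcal L}$ and its universal cover $X_{\mathcal L}$ is a CAT(0) cube complex. The Bestvina–Brady group $BB_{\mathcal L}$ is the kernel of the homomorphism $\Gamma_{\mathcal L}\to\mathbb Z$ sending every standard generator to $1$. $\mathrm{Aut}(X_{\mathcal L})$ is the group of cubical automorphisms of $X_{\mathcal L}$ with the compact-open topology. $\mathrm{Comm}_G(A)=\{g\in G: gAg^{-1}\cap A$ has finite index in both $A$ and $gAg^{-1}\}$. *)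

(* Defs.v *)
From Stdlib Require List.
From mathcomp Require Import all_boot.
Set Implicit Arguments. Unset Strict Implicit. Unset Printing Implicit Defensive.

Section RAAG.
Variables (V : finType) (adj : rel V).

(* A letter is a generator (b = false) or its inverse (b = true). *)
Definition letter := (V * bool)%type.
Definition word := seq letter.

(* The congruence on words defining the right-angled Artin group Gamma_L:
   generated by free cancellation and commutation of adjacent generators. *)
Inductive wequiv : word -> word -> Prop :=
| weq_refl x : wequiv x x
| weq_sym x y : wequiv x y -> wequiv y x
| weq_trans x y z : wequiv x y -> wequiv y z -> wequiv x z
| weq_cancel (u w : word) (s : V) (b : bool) :
    wequiv (u ++ (s, b) :: (s, ~~ b) :: w) (u ++ w)
| weq_comm (u w : word) (s t : V) (b c : bool) : adj s t ->
    wequiv (u ++ (s, b) :: (t, c) :: w) (u ++ (t, c) :: (s, b) :: w).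

(* Vertices of X_L = elements of Gamma_L, represented by words modulo wequiv.
   Cubes of X_L: for g in Gamma_L and a clique S of L, the cube g.<S> has
   vertex set { g * prod(T) : T subset of S }. *)
Definition clique (S : seq V) : Prop :=
  uniq S /\ (forall s t, s \in S -> t \in S -> s != t -> adj s t).

Definition in_cube (g : word) (S : seq V) (x : word) : Prop :=
  exists T : seq V, subseq T S /\ wequiv x (g ++ map (fun s => (s, false)) T).

Definition is_cube (C : word -> Prop) : Prop :=
  exists g S, clique S /\ forall x, C x <-> in_cube g S x.

Definition img (f : word -> word) (C : word -> Prop) : word -> Prop :=
  fun y => exists x, C x /\ wequiv (f x) y.

Definition maps_cubes (f : word -> word) : Prop :=
  forall g S, clique S -> is_cube (img f (in_cube g S)).

(* Cubical automorphisms of X_L, given by their action on vertices: bijections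
   of the vertex set (words mod wequiv) which, together with their inverse,
   send vertex sets of cubes to vertex sets of cubes. *)
Definition is_inverse (f finv : word -> word) : Prop :=
  (forall x y, wequiv x y -> wequiv (finv x) (finv y)) /\
  (forall x, wequiv (f (finv x)) x) /\ (forall x, wequiv (finv (f x)) x) /\
  maps_cubes finv.

Definition isAut (f : word -> word) : Prop :=
  (forall x y, wequiv x y -> wequiv (f x) (f y)) /\ maps_cubes f /\
  exists finv, is_inverse f finv.

(* subgroups of Aut(X_L) are predicates on vertex maps *)
Definition apred := (word -> word) -> Prop.

(* Gamma_L acting by deck transformations (left multiplication). *)
Definition Gamma : apred := fun h =>
  isAut h /\ exists g : word, forall x, wequiv (h x) (g ++ x).

(* Bestvina--Brady group: kernel of the map sending each generator to 1,
   i.e. exponent sum zero. *)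
Definition expsum0 (g : word) : bool :=
  count (fun l : letter => ~~ l.2) g == count (fun l : letter => l.2) g.

Definition BB : apred := fun h =>
  isAut h /\ exists g : word, expsum0 g /\ forall x, wequiv (h x) (g ++ x).

Definition fin_index (K A : apred) : Prop :=
  exists cs : seq (word -> word), (forall c, List.In c cs -> A c) /\
  forall a, A a -> exists c, List.In c cs /\
    exists k, K k /\ forall x, wequiv (a x) (c (k x)).

Definition conjg (g ginv : word -> word) (A : apred) : apred := fun h =>
  isAut h /\ exists a, A a /\ forall x, wequiv (h x) (g (a (ginv x))).

Definition inter (A B : apred) : apred := fun h => A h /\ B h.

Definition Comm (A : apred) : apred := fun g =>
  isAut g /\ exists ginv, is_inverse g ginv /\
    fin_index (inter A (conjg g ginv A)) A /\
    fin_index (inter A (conjg g ginv A)) (conjg g ginv A).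

(* H is not discrete in Aut(X_L) (compact-open topology = topology of
   pointwise convergence on vertices, X_L locally finite): every basic
   neighbourhood of the identity, i.e. the pointwise stabiliser of a finite
   set of vertices, contains a non-identity element of the subgroup H. *)
Definition not_discrete (H : apred) : Prop :=
  forall F : seq word, exists h, H h /\
    (forall x, List.In x F -> wequiv (h x) x) /\
    ~ (forall x, wequiv (h x) x).

End RAAG.

(* Wedge of four copies of a graph (T, e) glued along the vertex v:
   None is the common vertex v, Some (i, x) is vertex x <> v of copy i. *)
Section Wedge.
Variables (T : finType) (e : rel T) (v : T).

Definition wedge_vertex := option ('I_4 * {x : T | x != v})%type.

Definition wedge_adj : rel wedge_vertex := fun a b =>
  match a, b with
  | None, None => false
  | None, Some (_, y) => e v (val y)
  | Some (_, x), None => e (val x) v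
  | Some (i, x), Some (j, y) => (i == j) && e (val x) (val y)
  end.
End Wedge.

(* Main.v *)
From Stdlib Require Import ZArith Lia List.
Require Import Defs.
From mathcomp Require Import all_boot zify.
Set Implicit Arguments. Unset Strict Implicit.


Section Gen.
Variables (V : finType) (adj : rel V).
Notation wq := (wequiv adj).

Lemma wq_prefix g x y : wq x y -> wq (g ++ x) (g ++ y).
Proof.
elim=> {x y} [x|x y _ IH|x y z _ IH1 _ IH2|u w s b|u w s t b c Hst].
- exact: weq_refl.
- exact: weq_sym.
- exact: weq_trans IH1 IH2.
- by rewrite !catA; apply: weq_cancel.
- by rewrite !catA; apply: weq_comm.
Qed.

Definition flipl (l : letter V) : letter V := (l.1, ~~ l.2).
Definition winv (g : word V) : word V := rev (map flipl g).

Lemma winv_cons a g : winv (a :: g) = winv g ++ [:: flipl a].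
Proof. by rewrite /winv /= rev_cons cats1. Qed.

Lemma winvK g : winv (winv g) = g.
Proof.
by rewrite /winv map_rev revK -map_comp map_id_in // => [[s b]] _; rewrite /flipl /= negbK.
Qed.

Lemma wq_winv g y : wq (g ++ winv g ++ y) y.
Proof.
elim: g y => [|a g IH] y /=; first exact: weq_refl.
rewrite winv_cons -catA /=.
apply: weq_trans (_ : wq ([:: a] ++ flipl a :: y) y).
  by apply: (wq_prefix [:: a]); apply: IH.
by case: a => s b; apply: (weq_cancel adj [::] y s b).
Qed.

Lemma is_cube_ext (C D : word V -> Prop) :
  (forall x, C x <-> D x) -> is_cube adj C -> is_cube adj D.
Proof.
move=> H [g [S [HS HC]]]; exists g, S; split=> // x; rewrite -H; exact: HC.
Qed.

Definition resp (f : word V -> word V) := forall x y, wq x y -> wq (f x) (f y).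

Lemma maps_cubes_comp f g : resp f -> maps_cubes adj f -> maps_cubes adj g ->
  maps_cubes adj (fun x => f (g x)).
Proof.
move=> Rf Hf Hg g0 S HS.
have [g1 [S1 [HS1 Heq]]] := Hg g0 S HS.
have [g2 [S2 [HS2 Heq2]]] := Hf g1 S1 HS1.
exists g2, S2; split=> // y; rewrite -Heq2; split.
- move=> [x [Cx Hfx]]; exists (g x); split=> //; apply/Heq.
  by exists x; split=> //; apply: weq_refl.
- move=> [z [Cz Hfz]]; have [x [Cx Hgx]] := proj2 (Heq z) Cz.
  by exists x; split=> //; apply: weq_trans Hfz; apply: Rf.
Qed.

Lemma isAut_comp f g : isAut adj f -> isAut adj g -> isAut adj (fun x => f (g x)).
Proof.
move=> [Rf [Cf [fi [Rfi [Hf1 [Hf2 Cfi]]]]]] [Rg [Cg [gi [Rgi [Hg1 [Hg2 Cgi]]]]]].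
split; first by move=> x y H; apply: Rf; apply: Rg.
split; first exact: maps_cubes_comp.
exists (fun x => gi (fi x)); split; first by move=> x y H; apply: Rgi; apply: Rfi.
split; first by move=> x; apply: weq_trans (Hf1 x); apply: Rf.
split; first by move=> x; apply: weq_trans (Hg2 x); apply: Rgi.
exact: maps_cubes_comp.
Qed.

Definition Lm (g : word V) := fun x : word V => g ++ x.

Lemma maps_cubes_L g : maps_cubes adj (Lm g).
Proof.
move=> g0 S HS; exists (g ++ g0), S; split=> // y; split.
- move=> [x [[T0 [HT Hx]] Hy]]; exists T0; split=> //.
  apply: weq_trans (weq_sym Hy) _; rewrite -catA; exact: wq_prefix.
- move=> [T0 [HT Hy]]; exists (g0 ++ map (fun s => (s, false)) T0); split.
    by exists T0; split=> //; apply: weq_refl.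
  by rewrite /Lm catA; apply: weq_sym.
Qed.

Lemma isAut_L g : isAut adj (Lm g).
Proof.
split; first by move=> x y; apply: wq_prefix.
split; first exact: maps_cubes_L.
exists (Lm (winv g)); split; first by move=> x y; apply: wq_prefix.
split; first by move=> x; apply: wq_winv.
split; last exact: maps_cubes_L.
move=> x; rewrite /Lm; have H := wq_winv (winv g) x; rewrite winvK in H; exact: H.
Qed.

Definition lsum (h : letter V -> Z) (w : word V) : Z :=
  foldr (fun l s => (h l + s)%Z) 0%Z w.

Lemma lsum_cat h a b : lsum h (a ++ b) = (lsum h a + lsum h b)%Z.
Proof. elim: a => [|l a IH] /=; [lia | rewrite IH; lia]. Qed.

Lemma lsum_rev h a : lsum h (rev a) = lsum h a.
Proof. elim: a => [|l a IH] //=; rewrite rev_cons -cats1 lsum_cat IH /=; lia. Qed.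

Lemma lsum_winv h a : (forall l, h (flipl l) = - h l)%Z -> lsum h (winv a) = (- lsum h a)%Z.
Proof. move=> Hh; rewrite /winv lsum_rev; elim: a => [|l a IH] //=; rewrite Hh IH; lia. Qed.

Lemma lsum_wq h x y : (forall l, h (flipl l) = - h l)%Z -> wq x y -> lsum h x = lsum h y.
Proof.
move=> Hh; elim=> {x y} //.
- by move=> x y z _ -> _ ->.
- move=> u w s b; rewrite !lsum_cat /=; have := Hh (s, b); rewrite /flipl /=; lia.
- move=> u w s t b c _; rewrite !lsum_cat /=; lia.
Qed.

End Gen.

Definition ord2 : 'I_4 := @Ordinal 4 2 isT.
Definition ord3 : 'I_4 := @Ordinal 4 3 isT.
Definition sw (i : 'I_4) : 'I_4 :=
  if val i == 2 then ord3 else if val i == 3 then ord2 else i.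

Lemma swK : cancel sw sw.
Proof. by case=> [[|[|[|[|m]]]] Hi]; apply/val_inj. Qed.

Lemma sw_lt2 (i : 'I_4) : (i < 2)%N -> sw i = i.
Proof. by case: i => [[|[|m]] Hi] //= _; apply/val_inj. Qed.

Lemma sw_ltE (i : 'I_4) : (sw i < 2)%N = (i < 2)%N.
Proof. by case: i => [[|[|[|[|m]]]] Hi]. Qed.

Section Wedge2.
Variables (T : finType) (e : rel T) (v : T).
Hypothesis esym : symmetric e.
Notation V := (wedge_vertex v).
Notation adjL := (@wedge_adj T e v).
Notation wq := (wequiv adjL).

Definition sigV (a : V) : V :=
  match a with None => None | Some (i, x) => Some (sw i, x) end.

Lemma sigVK : cancel sigV sigV.
Proof. by case=> [[i x]|] //=; rewrite swK. Qed.

Lemma adj_sigV a b : adjL (sigV a) (sigV b) = adjL a b.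
Proof. by case: a => [[i x]|]; case: b => [[j y]|] //=; rewrite (inj_eq (can_inj swK)). Qed.

Lemma adjL_sym : symmetric adjL.
Proof. by case=> [[i x]|]; case=> [[j y]|] //=; rewrite esym // eq_sym. Qed.

Definition piL (l : letter V) : Z :=
  match l.1 with
  | Some (i, _) => if (i < 2)%N then (if l.2 then (-1)%Z else 1%Z) else 0%Z
  | None => 0%Z end.

Lemma piL_flip l : piL (flipl l) = (- piL l)%Z.
Proof. by case: l => [[[i x]|] b]; rewrite /flipl /piL /=; try case: (i < 2)%N; case: b. Qed.

Lemma piL_sig a b : piL (sigV a, b) = piL (a, b).
Proof. by case: a => [[i x]|] //; rewrite /piL /= sw_ltE. Qed.

Lemma piL_bound l : (- 1 <= piL l <= 1)%Z.
Proof. by case: l => [[[i x]|] b]; rewrite /piL /=; try case: (i < 2)%N; try case: b; lia. Qed.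

Lemma key s t b : s = t \/ adjL s t -> piL (s, b) = 0%Z \/ sigV t = t.
Proof.
case: s => [[i x]|]; last by left.
rewrite /piL /=; case Hi: (i < 2)%N; last by left.
move=> H; right; case: H => [<-|]; first by rewrite /= sw_lt2.
by case: t => [[j y]|] //= /andP [/eqP <- _]; rewrite sw_lt2.
Qed.

Variables (n k : Z).

Definition P (q : Z) : bool := (Z.modulo q n =? k)%Z.
Definition sig (q : Z) (a : V) : V := if P q then sigV a else a.
Definition tau (q : Z) (l : letter V) : letter V := (sig q l.1, l.2).

Fixpoint ftr (q : Z) (w : word V) : word V :=
  match w with [::] => [::] | l :: w' => tau q l :: ftr (q + piL l)%Z w' end.

Definition pis := lsum piL.

Lemma sigK q : cancel (sig q) (sig q).
Proof. by move=> a; rewrite /sig; case: (P q); rewrite ?sigVK. Qed.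

Lemma piL_sigq q a b : piL (sig q a, b) = piL (a, b).
Proof. by rewrite /sig; case: (P q); rewrite ?piL_sig. Qed.

Lemma adj_sig q a b : adjL (sig q a) (sig q b) = adjL a b.
Proof. by rewrite /sig; case: (P q); rewrite ?adj_sigV. Qed.

Lemma sig_shift q s t b : s = t \/ adjL s t -> sig (q + piL (s, b))%Z t = sig q t.
Proof.
case/(key b) => [->|Ht]; first by rewrite Z.add_0_r.
by rewrite /sig Ht; case: (P _); case: (P _).
Qed.

Lemma ftr_cat q u w : ftr q (u ++ w) = ftr q u ++ ftr (q + pis u)%Z w.
Proof.
elim: u q => [|l u IH] q /=; first by rewrite Z.add_0_r.
by rewrite IH Z.add_assoc.
Qed.

Lemma ftr_wq x y : wq x y -> forall q, wq (ftr q x) (ftr q y).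
Proof.
elim=> {x y}.
- move=> x q; exact: weq_refl.
- move=> x y _ IH q; exact: weq_sym.
- move=> x y z _ IH1 _ IH2 q; exact: weq_trans (IH1 q) (IH2 q).
- move=> u w s b q; rewrite !ftr_cat /=.
  rewrite /tau /= sig_shift; last by left.
  have -> : (q + pis u + piL (s, b) + piL (s, ~~ b) = q + pis u)%Z.
    by have := piL_flip (s, b); rewrite /flipl /=; lia.
  exact: weq_cancel.
- move=> u w s t b c Hst q; rewrite !ftr_cat /= /tau /=.
  rewrite sig_shift; last by right.
  rewrite sig_shift; last by right; rewrite adjL_sym.
  have -> : (q + pis u + piL (t, c) + piL (s, b) = q + pis u + piL (s, b) + piL (t, c))%Z by lia.
  by apply: weq_comm; rewrite adj_sig.
Qed.

Lemma ftrK q : cancel (ftr q) (ftr q).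
Proof.
move=> x; elim: x q => [|[a b] x IH] q //=.
by rewrite /tau /= sigK piL_sigq IH.
Qed.

Lemma pis_ftr q x : pis (ftr q x) = pis x.
Proof. by elim: x q => [|[a b] x IH] q //=; rewrite /pis /= -/pis IH /tau /= piL_sigq. Qed.

Lemma ftr_pos q (S : seq V) : uniq S ->
  (forall s t, s \in S -> t \in S -> s != t -> adjL s t) ->
  ftr q (map (fun s => (s, false)) S) = map (fun s => (s, false)) (map (sig q) S).
Proof.
elim: S q => [|s S IH] q //= /andP [sS uS] HS.
rewrite /tau /= IH //; last first.
  by move=> a c Ha Hc; apply: HS; rewrite inE ?Ha ?Hc orbT.
congr (_ :: _); congr (map _ _); apply/eq_in_map => t Ht.
apply: sig_shift; right; apply: HS; rewrite ?inE ?eqxx ?Ht ?orbT //.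
by apply: contraNneq sS => ->.
Qed.

Lemma clique_sig q S : clique adjL S -> clique adjL (map (sig q) S).
Proof.
move=> [uS HS]; split; first by rewrite map_inj_uniq // ; exact: can_inj (sigK q).
move=> a c /mapP [s Hs ->] /mapP [t Ht ->] Hne; rewrite adj_sig; apply: HS => //.
by apply: contraNneq Hne => ->.
Qed.

Lemma maps_cubes_ftr q : maps_cubes adjL (ftr q).
Proof.
move=> g S HS; exists (ftr q g), (map (sig (q + pis g)) S); split.
  exact: clique_sig.
move=> y; split.
- move=> [x [[T0 [HT Hx]] Hy]]; exists (map (sig (q + pis g)) T0); split.
    exact: map_subseq.
  apply: weq_trans (weq_sym Hy) _.
  apply: weq_trans (ftr_wq Hx q) _.
  rewrite ftr_cat ftr_pos; first exact: weq_refl.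
    by case: HS => uS _; exact: subseq_uniq HT uS.
  by case: HS => _ HS s t Hs Ht; apply: HS; apply: (mem_subseq HT).
- move=> [T1 [HT Hy]].
  set T0 := map (sig (q + pis g)) T1.
  have HT0 : subseq T0 S.
    have := map_subseq (sig (q + pis g)) HT.
    by rewrite (mapK (sigK _)).
  exists (g ++ map (fun s => (s, false)) T0); split.
    by exists T0; split=> //; apply: weq_refl.
  rewrite ftr_cat ftr_pos.
  + by rewrite /T0 (mapK (sigK _)); apply: weq_sym.
  + by case: HS => uS _; exact: subseq_uniq HT0 uS.
  + by case: HS => _ HS s t Hs Ht; apply: HS; apply: (mem_subseq HT0).
Qed.

Lemma isAut_ftr q : isAut adjL (ftr q).
Proof.
split; first by move=> x y H; apply: ftr_wq.
split; first exact: maps_cubes_ftr.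
exists (ftr q); split; first by move=> x y H; apply: ftr_wq.
split; first by move=> x; rewrite ftrK; apply: weq_refl.
split; first by move=> x; rewrite ftrK; apply: weq_refl.
exact: maps_cubes_ftr.
Qed.

End Wedge2.

Section Wedge3.
Variables (T : finType) (e : rel T) (v : T).
Hypothesis esym : symmetric e.
Notation V := (wedge_vertex v).
Notation adjL := (@wedge_adj T e v).
Notation wq := (wequiv adjL).
Variables (n k : Z).
Hypothesis npos : (0 < n)%Z.

Notation ftr := (@ftr T v n k).
Notation pis := (@pis T v).

Lemma ftr_mod q q' x : (q mod n = q' mod n)%Z -> ftr q x = ftr q' x.
Proof.
elim: x q q' => [|l x IH] q q' H //=.
have -> : tau n k q l = tau n k q' l by rewrite /tau /sig /P H.
congr (_ :: _); apply: IH.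
rewrite Z.add_mod; last lia. rewrite H -Z.add_mod; lia.
Qed.

Lemma is_inverse_ftr q : is_inverse adjL (ftr q) (ftr q).
Proof.
split; first by move=> x y H; apply: ftr_wq.
split; first by move=> x; rewrite ftrK; apply: weq_refl.
split; first by move=> x; rewrite ftrK; apply: weq_refl.
exact: maps_cubes_ftr.
Qed.

Definition AW (W : word V -> Prop) : apred V := fun h =>
  isAut adjL h /\ exists g, W g /\ forall x, wq (h x) (g ++ x).

Lemma pis_winv g : pis (winv g) = (- pis g)%Z.
Proof. apply: lsum_winv; exact: piL_flip. Qed.

Lemma ftr0_cat0 g0 y : (pis g0 mod n = 0)%Z -> ftr 0 (g0 ++ y) = ftr 0 g0 ++ ftr 0 y.
Proof.
move=> H; rewrite ftr_cat; congr (_ ++ _); apply: ftr_mod.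
by rewrite Z.add_0_l H Z.mod_0_l; lia.
Qed.

Lemma ftr0_f0 g0 x : (pis g0 mod n = 0)%Z -> ftr 0 (ftr 0 g0 ++ x) = g0 ++ ftr 0 x.
Proof.
move=> H; rewrite ftr0_cat0 ?ftrK //; by rewrite pis_ftr.
Qed.

Lemma comm_gen (W : word V -> Prop) (A : apred V) (rep : nat -> word V) :
  (forall h, A h <-> AW W h) ->
  (forall a b, W a -> W b -> W (a ++ b)) -> (forall a, W a -> W (winv a)) ->
  (forall a, W a -> W (ftr 0 a)) -> (forall j, W (rep j)) ->
  (forall j, pis (rep j) = Z.of_nat j) ->
  Comm adjL A (ftr 0).
Proof.
move=> HA Wcat Winv Wf Wrep Hrep.
have dec : forall g, exists j, (j < Z.to_nat n)%coq_nat /\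
    (pis (winv (rep j) ++ g) mod n = 0)%Z.
  move=> g; exists (Z.to_nat (pis g mod n)); split.
    have := Z.mod_pos_bound (pis g) n npos; lia.
  rewrite /pis lsum_cat -/pis pis_winv Hrep Z2Nat.id; last first.
    have := Z.mod_pos_bound (pis g) n npos; lia.
  have -> : (- (pis g mod n) + pis g = n * (pis g / n))%Z.
    have := Z.div_mod (pis g) n; lia.
  by rewrite Z.mul_comm Z.mod_mul; lia.
have LA : forall g, W g -> A (Lm g).
  by move=> g Wg; apply/HA; split; [exact: isAut_L | exists g; split=> // x; apply: weq_refl].
split; first exact: isAut_ftr.
exists (ftr 0); split; first exact: is_inverse_ftr.
split.
- exists (List.map (fun j => Lm (rep j)) (List.seq 0 (Z.to_nat n))); split.
    move=> c /List.in_map_iff [j [<- _]]; exact: LA.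
  move=> a /HA [_ [g [Wg Hg]]].
  have [j [Hj Hg0]] := dec g.
  exists (Lm (rep j)); split.
    by apply/List.in_map_iff; exists j; split=> //; apply/List.in_seq; lia.
  exists (Lm (winv (rep j) ++ g)); split.
    split; first by apply: LA; apply: Wcat => //; apply: Winv.
    split; first exact: isAut_L.
    exists (Lm (ftr 0 (winv (rep j) ++ g))); split.
      by apply: LA; apply: Wf; apply: Wcat => //; apply: Winv.
    move=> x; rewrite /Lm ftr0_f0 // ftrK; exact: weq_refl.
  move=> x; apply: weq_trans (Hg x) _; rewrite /Lm -catA.
  apply: weq_sym; exact: wq_winv.
- exists (List.map (fun j => fun x => ftr 0 (Lm (rep j) (ftr 0 x))) (List.seq 0 (Z.to_nat n))); split.
    move=> c /List.in_map_iff [j [<- _]]; split.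
      apply: isAut_comp; first exact: isAut_ftr.
      apply: isAut_comp; [exact: isAut_L | exact: isAut_ftr].
    by exists (Lm (rep j)); split; [exact: LA | move=> x; apply: weq_refl].
  move=> h [_ [a [/HA [_ [g [Wg Hg]]] Hh]]].
  have [j [Hj Hg0]] := dec g.
  set g0 := winv (rep j) ++ g.
  exists (fun x => ftr 0 (Lm (rep j) (ftr 0 x))); split.
    by apply/List.in_map_iff; exists j; split=> //; apply/List.in_seq; lia.
  exists (Lm (ftr 0 g0)); split.
    split; first by apply: LA; apply: Wf; apply: Wcat => //; apply: Winv.
    split; first exact: isAut_L.
    exists (Lm g0); split.
      by apply: LA; apply: Wcat => //; apply: Winv.
    move=> x; rewrite /Lm ftr0_cat0 // ftrK; exact: weq_refl.
  move=> x; apply: weq_trans (Hh x) _.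
  rewrite /Lm ftr0_f0 //.
  apply: ftr_wq => //; apply: weq_trans (Hg _) _.
  rewrite /g0 -catA; apply: weq_sym; exact: wq_winv.
Qed.

End Wedge3.

Section Wedge4.
Variables (T : finType) (e : rel T) (v w : T).
Hypothesis esym : symmetric e.
Hypothesis Hw : w != v.
Notation V := (wedge_vertex v).
Notation adjL := (@wedge_adj T e v).
Notation wq := (wequiv adjL).

Definition w' : {x : T | x != v} := exist _ w Hw.
Definition uL : letter V := (Some (ord0, w'), false).
Definition vinv : letter V := (None, true).

Lemma lsum_cons (h : letter V -> Z) l g : lsum h (l :: g) = (h l + lsum h g)%Z.
Proof. by []. Qed.

Lemma lsum_nseq (h : letter V -> Z) j l : lsum h (nseq j l) = (Z.of_nat j * h l)%Z.
Proof. elim: j => [|j IH] //; rewrite lsum_cons IH Nat2Z.inj_succ; lia. Qed.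

Definition esL (l : letter V) : Z := if l.2 then (-1)%Z else 1%Z.

Lemma esL_flip l : esL (flipl l) = (- esL l)%Z.
Proof. by case: l => a [] /=. Qed.

Lemma esE g : lsum esL g =
  (Z.of_nat (count (fun l : letter V => ~~ l.2) g) - Z.of_nat (count (fun l : letter V => l.2) g))%Z.
Proof.
elim: g => [|[a b] g IH] //; rewrite lsum_cons IH.
have C : forall p : pred (letter V), count p ((a, b) :: g) = (p (a, b) + count p g)%N by [].
rewrite !C /esL {C}; case: b; cbn [negb fst snd nat_of_bool]; lia. Qed.

Lemma expsum0E g : expsum0 g <-> lsum esL g = 0%Z.
Proof. rewrite /expsum0 esE; split => [/eqP H | H]; [rewrite H; lia | apply/eqP; lia]. Qed.

Lemma es_ftr n k q g : lsum esL (@ftr T v n k q g) = lsum esL g.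
Proof. by elim: g q => [|[a b] g IH] q //=; rewrite IH. Qed.

Lemma P_false M q : (Z.abs q <= Z.of_nat M)%Z ->
  P (Z.of_nat (2 * M + 2)) (Z.of_nat (M + 1)) q = false.
Proof.
move=> Hq; apply/Z.eqb_neq.
case: (Z.le_gt_cases 0 q) => H0.
  rewrite Z.mod_small; lia.
rewrite -(Z.mod_add q 1); last lia.
rewrite Z.mod_small; lia.
Qed.

Lemma ftr_id M x q : (Z.abs q + Z.of_nat (size x) <= Z.of_nat M)%Z ->
  @ftr T v (Z.of_nat (2 * M + 2)) (Z.of_nat (M + 1)) q x = x.
Proof.
elim: x q => [|l x IH] q //= Hq.
rewrite /tau /sig P_false; last lia.
rewrite IH; first by case: l.
have := piL_bound l; lia.
Qed.

Lemma ftr_nseq n k m q r : @ftr T v n k q (nseq m uL ++ r) = nseq m uL ++ @ftr T v n k (q + Z.of_nat m) r.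
Proof.
elim: m q => [|m IH] q /=; first by rewrite Z.add_0_r.
rewrite IH /tau /sig /= sw_lt2 //.
have -> : (q + piL uL + Z.of_nat m = q + Z.pos (Pos.of_succ_nat m))%Z by rewrite /piL /=; lia.
by case: (P _ _ _).
Qed.

Definition c2L (l : letter V) : Z :=
  match l.1 with Some (i, _) => if val i == 2 then esL l else 0%Z | None => 0%Z end.

Lemma c2L_flip l : c2L (flipl l) = (- c2L l)%Z.
Proof. case: l => [[[i x]|] b]; rewrite /c2L /flipl /=; last by []. by case: (val i == 2) => //; case: b. Qed.

Lemma main_lemma (F : seq (word V)) : exists h,
  Comm adjL (BB adjL) h /\ Comm adjL (Gamma adjL) h /\
  (forall x, List.In x F -> wq (h x) x) /\ ~ (forall x, wq (h x) x).
Proof.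
have HM : forall x, List.In x F -> (size x <= foldr (fun x m => maxn (size x) m) 0%N F)%N.
  elim: F => [|y F' IH] x //= [<-|Hx]; first exact: leq_maxl.
  exact: leq_trans (IH x Hx) (leq_maxr _ _).
move: HM; set M := foldr _ _ F => HM.
set n := Z.of_nat (2 * M + 2). set k := Z.of_nat (M + 1).
have npos : (0 < n)%Z by rewrite /n; lia.
exists (@ftr T v n k 0); split; last split; last split.
- apply: (@comm_gen T e v esym n k npos (fun g => expsum0 g) _
      (fun j => nseq j uL ++ nseq j vinv)).
  + by move=> h; split; move=> [H1 [g [H2 H3]]]; split=> //; exists g.
  + move=> a b /expsum0E Ha /expsum0E Hb; apply/expsum0E; rewrite lsum_cat Ha Hb; lia.
  + move=> a /expsum0E Ha; apply/expsum0E; rewrite lsum_winv ?Ha //; exact: esL_flip.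
  + move=> a /expsum0E Ha; apply/expsum0E; by rewrite es_ftr.
  + move=> j; apply/expsum0E; rewrite lsum_cat !lsum_nseq /esL /=; lia.
  + move=> j; rewrite /pis lsum_cat !lsum_nseq /piL /=; lia.
- apply: (@comm_gen T e v esym n k npos (fun _ => True) _ (fun j => nseq j uL)) => //.
  + move=> h; split.
      by move=> [H1 [g H3]]; split=> //; exists g.
    by move=> [H1 [g [_ H3]]]; split=> //; exists g.
  + move=> j; rewrite /pis lsum_nseq /piL /=; lia.
- move=> x Hx; rewrite ftr_id; first exact: weq_refl.
  have := HM x Hx; lia.
- move=> H.
  set x0 := nseq (M + 1) uL ++ [:: (Some (ord2, w'), false)].
  have := lsum_wq (@c2L_flip) (H x0).
  rewrite /x0 ftr_nseq /= /tau /sig /P.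
  have -> : ((0 + Z.of_nat (M + 1)) mod n =? k)%Z = true.
    apply/Z.eqb_eq; rewrite Z.mod_small /k /n; lia.
  rewrite !lsum_cat !lsum_nseq /c2L /esL /=; lia.
Qed.

End Wedge4.

Theorem corollary4p7 (T : finType) (e : rel T) (v w : T) :
  symmetric e -> irreflexive e -> w != v ->
  let adjL := @wedge_adj T e v in
  not_discrete adjL
    (inter (Comm adjL (BB adjL)) (Comm adjL (Gamma adjL))) /\
  not_discrete adjL (Comm adjL (BB adjL)).
Proof.
move=> Hs _ Hw adjL; split=> F; have [h [H1 [H2 [H3 H4]]]] := main_lemma Hs Hw F.
- by exists h; split=> //; split.
- by exists h.
Qed.
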